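(* Let $D$ be an integral domain. The following are equivalent: (i) $D$ is a PvMD; (ii) $D$ is essential and admits an essential representation of the form $\{D_{\mathfrak p}:\mathfrak p\in Y\}$, where $Y\subseteq\operatorname{Spec}(D)$ is quasi-compact with respect to the Zariski topology.
   Context: All rings are commutative with identity. For an integral domain $D$ with quotient field $K$ and nonzero fractional ideal $I$: $(D:I)=\{x\in K:xI\subseteq D\}$, $I^v=(D:(D:I))$, $I^t=\bigcup\{J^v:J\subseteq I \text{ finitely generated}\}$; $t$-ideals are $(0)$ and ideals with $I=I^t$; $t$-maximal ideals are $t$-ideals maximal among proper $t$-ideals. $D$ is a PvMD if $D_{\mathfrak m}$ is a valuation domain for all $t$-maximal $\mathfrak m$. A valuation overring is essential if it equals $D_{\mathfrak p}$ for a prime $\mathfrak p$; an essential representation of $D$ is a family of essential valuation overrings of $D$ with intersection $D$; $D$ is essential if it has one. The Zariski topology on $\operatorname{Spec}(D)$ has closed sets $V(\mathfrak a)=\{\mathfrak p:\mathfrak a\subseteq\mathfrak p\}$. *)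

(* Defs.v *)
(* An integral domain D is an [R : idomainType]; its quotient
   field K is [{fraction R}], and D is identified with its image under
   [FracField.tofrac]. *)
From HB Require Import structures.
From Stdlib Require Import List.
From mathcomp Require Import all_boot all_order all_algebra fraction.
Set Implicit Arguments. Unset Strict Implicit. Unset Printing Implicit Defensive.
Import GRing.Theory.
Local Open Scope ring_scope.

Section Defs.
Variable R : idomainType.
Local Notation K := {fraction R}.
Local Notation emb := (@FracField.tofrac R).

Definition inD (x : K) : Prop := exists r : R, x = emb r.

Definition is_ideal (I : R -> Prop) : Prop :=
  I 0 /\ (forall a b, I a -> I b -> I (a - b)) /\ (forall r a, I a -> I (r * a)).
Definition is_prime (p : R -> Prop) : Prop :=
  is_ideal p /\ ~ p 1 /\ (forall a b, p (a * b) -> p a \/ p b).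

Definition embI (I : R -> Prop) (x : K) : Prop := exists a, I a /\ x = emb a.

Definition colon (A : K -> Prop) (x : K) : Prop := forall a, A a -> inD (x * a).
Definition vclos (A : K -> Prop) (y : K) : Prop := forall x, colon A x -> inD (x * y).
Definition fgen (s : seq R) (y : K) : Prop :=
  exists c : seq R, size c = size s /\ y = emb (\sum_(i < size s) c`_i * s`_i).
Definition tclos (I : R -> Prop) (y : K) : Prop :=
  exists s : seq R, (forall a, a \in s -> I a) /\ vclos (fgen s) y.

Definition is_tideal (I : R -> Prop) : Prop :=
  is_ideal I /\ ((forall a, I a -> a = 0) \/ (forall y, tclos I y <-> embI I y)).
Definition is_tmaximal (m : R -> Prop) : Prop :=
  is_tideal m /\ ~ m 1 /\
  (forall J, is_tideal J -> ~ J 1 -> (forall a, m a -> J a) -> forall a, J a -> m a).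

Definition loc (p : R -> Prop) (x : K) : Prop :=
  exists a s, ~ p s /\ x = emb a / emb s.

Definition is_valuation (V : K -> Prop) : Prop :=
  forall x : K, x != 0 -> V x \/ V x^-1.

Definition PvMD : Prop := forall m, is_tmaximal m -> is_valuation (loc m).

Definition ess_rep (Y : (R -> Prop) -> Prop) : Prop :=
  (forall p, Y p -> is_prime p /\ is_valuation (loc p)) /\
  (forall x : K, (forall p, Y p -> loc p x) <-> inD x).

Definition essential : Prop := exists Y, ess_rep Y.

(* Y (a set of primes) is quasi-compact in the Zariski topology: every cover of
   Y by open sets Spec(D) \ V(a_i) has a finite subcover. *)
Definition zariski_quasi_compact (Y : (R -> Prop) -> Prop) : Prop :=
  forall (I : Type) (a : I -> R -> Prop),
    (forall p, Y p -> exists i, ~ (forall r, a i r -> p r)) ->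
    exists s : seq I, forall p, Y p ->
      exists i, Stdlib.Lists.List.In i s /\ ~ (forall r, a i r -> p r).
End Defs.

(* Main.v *)
Require Import Defs.
From mathcomp Require Import all_boot all_order all_algebra fraction.
From mathcomp Require classical_sets.
From Stdlib Require Import Classical.
Set Implicit Arguments. Unset Strict Implicit. Unset Printing Implicit Defensive.
Import GRing.Theory.
Local Open Scope ring_scope.

Section Aux.
Variable R : idomainType.
Local Notation K := {fraction R}.
Local Notation emb := (@FracField.tofrac R).
Implicit Types (I J p m : R -> Prop).

Lemma emb_inj (a b : R) : emb a = emb b -> a = b.
Proof. by move=> h; apply/eqP; rewrite -tofrac_eq h. Qed.

Lemma emb_neq0 (a : R) : a != 0 -> emb a != 0.
Proof. by rewrite tofrac_eq0. Qed.

Lemma inD_emb (a : R) : inD (emb a). Proof. by exists a. Qed.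
Lemma inD0 : inD (0 : K). Proof. by exists 0; rewrite rmorph0. Qed.
Lemma inD1 : inD (1 : K). Proof. by exists 1; rewrite rmorph1. Qed.
Lemma inDD (x y : K) : inD x -> inD y -> inD (x + y).
Proof. by move=> [a ->] [b ->]; exists (a + b); rewrite rmorphD. Qed.
Lemma inDB (x y : K) : inD x -> inD y -> inD (x - y).
Proof. by move=> [a ->] [b ->]; exists (a - b); rewrite rmorphB. Qed.
Lemma inDM (x y : K) : inD x -> inD y -> inD (x * y).
Proof. by move=> [a ->] [b ->]; exists (a * b); rewrite rmorphM. Qed.

Definition col (s : seq R) (x : K) := forall a, a \in s -> inD (x * emb a).
Definition vl (s : seq R) (y : K) := forall x, col s x -> inD (x * y).

Lemma fgen_mem s a : a \in s -> fgen s (emb a).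
Proof.
elim: s => [//|b s IH]; rewrite in_cons => /orP [/eqP ->|/IH [c [hc ->]]].
  exists (1 :: nseq (size s) 0); split; first by rewrite /= size_nseq.
  rewrite /= big_ord_recl /= mul1r big1 ?addr0 // => i _.
  by rewrite /= nth_nseq; case: ifP => _; rewrite mul0r.
exists (0 :: c); split; [by rewrite /= hc|].
by rewrite /= big_ord_recl /= mul0r add0r.
Qed.

Lemma colon_col s x : colon (fgen s) x <-> col s x.
Proof.
split=> [h a ha|h z [c [_ ->]]]; first exact: h (fgen_mem ha).
rewrite rmorph_sum mulr_sumr.
apply: (big_ind (fun y => inD y)); [exact: inD0|exact: inDD|] => i _.
rewrite rmorphM mulrCA; apply: inDM; first exact: inD_emb.
by apply: h; apply: mem_nth.
Qed.

Lemma vclos_vl s y : vclos (fgen s) y <-> vl s y.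
Proof.
split=> h x hx; apply: h; first by apply/colon_col.
by apply/colon_col.
Qed.

Lemma tclos_vl (I : R -> Prop) y :
  tclos I y <-> exists s, (forall a, a \in s -> I a) /\ vl s y.
Proof.
split=> [[s [h1 h2]]|[s [h1 h2]]]; exists s; split=> //; exact/vclos_vl.
Qed.

Lemma vl_inD s y : vl s y -> inD y.
Proof.
move=> h; rewrite -[y]mul1r; apply: h => a _; rewrite mul1r; exact: inD_emb.
Qed.

Lemma vl_mem s a : a \in s -> vl s (emb a).
Proof. by move=> ha x hx; apply: hx. Qed.

Lemma vl_trans s S y :
  (forall a, a \in s -> vl S (emb a)) -> vl s y -> vl S y.
Proof. by move=> h hy x hx; apply: hy => a ha; apply: h. Qed.

Lemma vl_sub S1 S2 y : {subset S1 <= S2} -> vl S1 y -> vl S2 y.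
Proof. by move=> hs h x hx; apply: h => a ha; apply: hx; apply: hs. Qed.

Lemma vlB S y1 y2 : vl S y1 -> vl S y2 -> vl S (y1 - y2).
Proof. by move=> h1 h2 x hx; rewrite mulrBr; apply: inDB; [apply: h1|apply: h2]. Qed.

Lemma vlM S r y : vl S y -> vl S (emb r * y).
Proof. by move=> h x hx; rewrite mulrCA; apply: inDM; [apply: inD_emb|apply: h]. Qed.

Lemma vl0 S : vl S 0.
Proof. by move=> x _; rewrite mulr0; apply: inD0. Qed.

Definition tid2 (I : R -> Prop) := is_ideal I /\ forall y, tclos I y -> embI I y.

Lemma tideal_split I : is_tideal I -> (forall a, I a -> a = 0) \/ tid2 I.
Proof.
move=> [hI [h|h]]; [by left|right; split=> // y hy; by apply/(h y)].
Qed.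

Lemma tid2_tideal I : tid2 I -> is_tideal I.
Proof.
move=> [hI h]; split=> //; right=> y; split; first exact: h.
move=> [a [ha ->]]; apply/tclos_vl; exists [:: a]; split.
  by move=> b; rewrite inE => /eqP ->.
by apply: vl_mem; rewrite inE.
Qed.

Lemma ideal0 I : is_ideal I -> I 0. Proof. by case. Qed.
Lemma idealB I a b : is_ideal I -> I a -> I b -> I (a - b).
Proof. by move=> [_ [h _]]; apply: h. Qed.
Lemma idealM I r a : is_ideal I -> I a -> I (r * a).
Proof. by move=> [_ [_ h]]; apply: h. Qed.

Lemma tid2_no1 I : tid2 I -> tclos I 1 -> I 1.
Proof.
move=> [_ h] /h [a [ha e]]; suff -> : 1 = a by [].
by apply: emb_inj; rewrite rmorph1.
Qed.

Lemma In_map (T : Type) (f : T -> R) (i : T) s : List.In i s -> f i \in map f s.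
Proof. elim: s => [//|j s IH] /= [->|/IH h]; rewrite inE ?eqxx //; by rewrite h orbT. Qed.

Lemma loc_of (p : R -> Prop) (x : K) u : is_ideal p -> ~ p u -> inD (x * emb u) -> loc p x.
Proof.
move=> hp hu [c hc]; exists c, u; split=> //.
have u0 : u != 0 by apply/negP => /eqP e; apply: hu; rewrite e; apply: ideal0.
by rewrite -hc mulfK // emb_neq0.
Qed.

Lemma loc_inD (p : R -> Prop) (x : K) u c : is_ideal p -> ~ p u -> x = emb c / emb u ->
   u != 0 /\ x * emb u = emb c.
Proof.
move=> hp hu ->.
have u0 : u != 0 by apply/negP => /eqP e; apply: hu; rewrite e; apply: ideal0.
by split=> //; rewrite divfK // emb_neq0.
Qed.


Lemma partB (Y : (R -> Prop) -> Prop) : ess_rep Y -> zariski_quasi_compact Y -> PvMD R.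
Proof.
move=> [hY hrep] hqc m [hmt [hm1 hmax]] x x0.
have hmI : is_ideal m by case: hmt.
case: (tideal_split hmt) => [hz|hm2].
  case: (classic (exists p, Y p)) => [[p Yp]|nY].
    have [pp pv] := hY p Yp; have hpI : is_ideal p by case: pp.
    case: (pv x x0) => [[c [u [hu e]]]|[c [u [hu e]]]].
      have [u0 _] := loc_inD hpI hu e.
      left; exists c, u; split=> // /hz /eqP; exact/negP.
    have [u0 _] := loc_inD hpI hu e.
    right; exists c, u; split=> // /hz /eqP; exact/negP.
  have [r hr] : inD x by apply/hrep => p Yp; exfalso; apply: nY; exists p.
  left; exists r, 1; split; last by rewrite rmorph1 divr1.
  by move=> /hz /eqP; rewrite oner_eq0.
apply: NNPP => hnot.
have H1 : ~ loc m x by move=> h; apply: hnot; left.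
have H2 : ~ loc m x^-1 by move=> h; apply: hnot; right.
pose I := {u : R | m u}.
pose a := fun (i : I) (r : R) => r = proj1_sig i.
have cov : forall p, Y p -> exists i, ~ (forall r, a i r -> p r).
  move=> p Yp; have [pp pv] := hY p Yp; have hpI : is_ideal p by case: pp.
  have [u [hu hmu]] : exists u, ~ p u /\ m u.
    case: (pv x x0) => [[c [u [hu e]]]|[c [u [hu e]]]]; exists u; split=> //;
      apply: NNPP => hmu; have [_ e2] := loc_inD hpI hu e.
      by apply: H1; apply: (loc_of hmI hmu); rewrite e2; apply: inD_emb.
    by apply: H2; apply: (loc_of hmI hmu); rewrite e2; apply: inD_emb.
  exists (exist _ u hmu) => h; apply: hu; exact: h.
have [s hs] := hqc I a cov.
apply: hm1; apply: (tid2_no1 hm2); apply/tclos_vl.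
exists (map (@proj1_sig _ _) s); split.
  elim: s {hs} => [//|i s IH] a0; rewrite /= inE => /orP [/eqP ->|/IH //].
  exact: proj2_sig i.
move=> y hy; apply/hrep => p Yp.
have [pp _] := hY p Yp; have hpI : is_ideal p by case: pp.
have [i [hi hni]] := hs p Yp.
have hu : ~ p (proj1_sig i) by move=> h; apply: hni => r ->.
apply: (loc_of hpI hu); rewrite mulr1; apply: hy; exact: In_map.
Qed.


Lemma tmax_prime m : is_tmaximal m -> is_prime m.
Proof.
move=> [hmt [hm1 hmax]]; have hmI : is_ideal m by case: hmt.
split=> //; split=> // a b hab.
case: (tideal_split hmt) => [hz|hm2].
  move/hz/eqP: hab; rewrite mulf_eq0 => /orP [/eqP ->|/eqP ->]; [left|right];
  exact: ideal0.
case: (classic (m a)) => ha; [by left|right].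
pose J := fun r => m (r * a).
have hJI : is_ideal J.
  split; first by rewrite /J mul0r; apply: ideal0.
  split=> [r1 r2 h1 h2|r r1 h]; rewrite /J.
    by rewrite mulrBl; apply: idealB.
  by rewrite -mulrA; apply: idealM.
have hJ2 : tid2 J.
  split=> // y /tclos_vl [s [hs hv]].
  have hy := vl_inD hv; case: hy => t et.
  have : tclos m (emb a * y).
    apply/tclos_vl; exists (map (fun r => r * a) s); split.
      by move=> c /mapP [r hr ->]; apply: hs.
    move=> x hx; rewrite mulrA; apply: hv => r hr.
    rewrite -mulrA -rmorphM [a * r]mulrC; apply: hx; apply/mapP; exists r => //.
    
  case/(proj2 hm2) => r0 [hr0 e]; exists t; split=> //.
  rewrite /J; suff -> : t * a = r0 by [].
  by apply: emb_inj; rewrite rmorphM mulrC -e et.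
have := hmax J (tid2_tideal hJ2).
have hJ1 : ~ J 1 by rewrite /J mul1r.
move=> /(_ hJ1) h; apply: h.
  by move=> r hr; rewrite /J mulrC; apply: idealM.
by rewrite /J mulrC.
Qed.


Lemma tmax_above A : tid2 A -> ~ A 1 ->
  exists m, is_tmaximal m /\ tid2 m /\ (forall r, A r -> m r).
Proof.
move=> hA hA1.
pose L := fun J : R -> Prop => tid2 J /\ ~ J 1 /\ (forall r, A r -> J r).
pose P := fun J : R -> Prop => L J \/ (forall r, ~ J r).
have PA : P A by left.
have hZ : forall F : classical_sets.set (classical_sets.set R),
   classical_sets.subset F P ->
   classical_sets.total_on F classical_sets.subset ->
   P (classical_sets.bigcup F (fun X => X)).
  move=> F FP Ftot.
  have hL : forall X r, F X -> X r -> L X.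
    move=> X r FX Xr; case: (FP X FX) => // h; by case: (h r).
  case: (classic (exists X0, F X0 /\ exists r, X0 r)) => [[X0 [FX0 [r0 Xr0]]]|no]; last first.
    by right=> r [X FX Xr]; apply: no; exists X; split=> //; exists r.
  have [[[X0I _] _] [_ X0A]] := hL X0 r0 FX0 Xr0.
  have comb : forall X1 X2 r1 r2, F X1 -> F X2 -> X1 r1 -> X2 r2 ->
      exists X, F X /\ L X /\ X r1 /\ X r2.
    move=> X1 X2 r1 r2 F1 F2 h1 h2; case: (Ftot X1 X2 F1 F2) => hs.
      by exists X2; split=> //; split; [exact: hL F2 h2|split=> //; apply: hs].
    by exists X1; split=> //; split; [exact: hL F1 h1|split=> //; apply: hs].
  have gather : forall s : seq R, (forall a, a \in s -> classical_sets.bigcup F (fun X => X) a) ->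
      exists X, F X /\ L X /\ forall a, a \in s -> X a.
    elim=> [_|b s IH hs]; first by exists X0; split=> //; split=> //; exact: hL FX0 Xr0.
    have [X [FX [LX hX]]] : exists X, F X /\ L X /\ forall a, a \in s -> X a.
      by apply: IH => a ha; apply: hs; rewrite inE ha orbT.
    have [Xb FXb Xbb] := hs b (mem_head _ _).
    have LXb : L Xb by apply: hL FXb Xbb.
    case: (Ftot X Xb FX FXb) => hs2.
      exists Xb; split=> //; split=> // a; rewrite inE => /orP [/eqP ->//|ha].
      by apply: hs2; apply: hX.
    exists X; split=> //; split=> // a; rewrite inE => /orP [/eqP ->|ha].
      by apply: hs2.
    by apply: hX.
  left; split; [split; [split|]|split].
  - by exists X0.
  - split.
      move=> a b [X1 F1 h1] [X2 F2 h2].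
      have [X [FX [[[XI _] _] [ha hb]]]] := comb X1 X2 a b F1 F2 h1 h2.
      by exists X => //; apply: idealB.
    move=> r a [X1 F1 h1]; have [[XI _] _] := hL X1 a F1 h1.
    by exists X1 => //; apply: idealM.
  - move=> y /tclos_vl [s [hs hv]].
    have [X [FX [[[_ XC] _] hX]]] := gather s hs.
    have [c [Xc ->]] : embI X y by apply: XC; apply/tclos_vl; exists s.
    by exists c; split=> //; exists X.
  - by move=> [X FX X1]; have [_ [h _]] := hL X 1 FX X1.
  - by move=> r hr; exists X0 => //; apply: X0A.
have [M [PM Mmax]] := classical_sets.Zorn_bigcup hZ.
have LM : L M.
  case: PM => // h; exfalso; apply: (Mmax A) => //; split; first by move=> r /h.
  by move=> hs; apply: (h 0); apply: hs; apply: ideal0; case: hA.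
have [hM2 [hM1 hMA]] := LM.
exists M; split=> //; split; first exact: tid2_tideal.
split=> // J hJt hJ1 hMJ r hJr.
case: (tideal_split hJt) => [hz|hJ2].
  by rewrite (hz r hJr); apply: ideal0; case: hM2.
apply: NNPP => hMr; apply: (Mmax J).
  by split=> // hs; apply: hMr; apply: hs.
by left; split=> //; split=> // a ha; apply: hMJ; apply: hMA.
Qed.


Lemma tmax_inter (x : K) : (forall p, is_tmaximal p -> loc p x) -> inD x.
Proof.
move=> h; apply: NNPP => hx.
pose Ax := fun r => inD (x * emb r).
have hA : tid2 Ax.
  split; [split; [|split]|].
  - by rewrite /Ax rmorph0 mulr0; apply: inD0.
  - by move=> a b ha hb; rewrite /Ax rmorphB mulrBr; apply: inDB.
  - by move=> r a ha; rewrite /Ax rmorphM mulrCA; apply: inDM => //; apply: inD_emb.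
  - move=> y /tclos_vl [s [hs hv]]; have [t et] := vl_inD hv.
    exists t; split=> //; rewrite /Ax -et; exact: hv.
have hA1 : ~ Ax 1 by rewrite /Ax rmorph1 mulr1.
have [m [hm [_ hAm]]] := tmax_above hA hA1.
have [c [u [hu e]]] := h m hm.
have hmI : is_ideal m by case: hm => [[]].
have [_ e2] := loc_inD hmI hu e.
apply: hu; apply: hAm; rewrite /Ax e2; exact: inD_emb.
Qed.

Lemma tmax_qc : zariski_quasi_compact (@is_tmaximal R).
Proof.
move=> I a cov.
pose Sa := fun r => exists i, a i r.
pose W := fun r => tclos Sa (emb r).
have gather : forall s : seq R, (forall c, c \in s -> W c) ->
   exists S, (forall b, b \in S -> Sa b) /\ forall c, c \in s -> vl S (emb c).
  elim=> [_|b s IH hs]; first by exists [::].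
  have [S [hS1 hS2]] : exists S, (forall b, b \in S -> Sa b) /\ forall c, c \in s -> vl S (emb c).
    by apply: IH => c hc; apply: hs; rewrite inE hc orbT.
  have /tclos_vl [Sb [hb1 hb2]] := hs b (mem_head _ _).
  exists (Sb ++ S); split.
    by move=> c; rewrite mem_cat => /orP [/hb1|/hS1].
  move=> c; rewrite inE => /orP [/eqP ->|hc].
    by apply: vl_sub hb2 => z hz; rewrite mem_cat hz.
  by apply: vl_sub (hS2 c hc) => z hz; rewrite mem_cat hz orbT.
have hW : tid2 W.
  split; [split; [|split]|].
  - by apply/tclos_vl; exists [::]; split=> //; rewrite rmorph0; apply: vl0.
  - move=> c d /tclos_vl [s1 [h1 v1]] /tclos_vl [s2 [h2 v2]].
    apply/tclos_vl; exists (s1 ++ s2); split.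
      by move=> z; rewrite mem_cat => /orP [/h1|/h2].
    rewrite rmorphB; apply: vlB.
      by apply: vl_sub v1 => z hz; rewrite mem_cat hz.
    by apply: vl_sub v2 => z hz; rewrite mem_cat hz orbT.
  - move=> r c /tclos_vl [s1 [h1 v1]]; apply/tclos_vl; exists s1; split=> //.
    by rewrite rmorphM; apply: vlM.
  - move=> y /tclos_vl [s [hs hv]].
    have [S [hS1 hS2]] := gather s hs.
    have hy : vl S y := vl_trans hS2 hv.
    have [t et] := vl_inD hy.
    exists t; split=> //; rewrite /W -et; apply/tclos_vl; exists S; done.
case: (classic (W 1)) => hW1; last first.
  have [m [hm [_ hWm]]] := tmax_above hW hW1.
  have [i hi] := cov m hm; exfalso; apply: hi => r hr; apply: hWm.
  apply/tclos_vl; exists [:: r]; split; last by apply: vl_mem; rewrite inE.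
  by move=> z; rewrite inE => /eqP ->; exists i.
have /tclos_vl [S [hS hv]] := hW1.
have [L hL] : exists L : seq I, forall b, b \in S -> exists i, List.In i L /\ a i b.
  elim: S {hv} hS => [_|b S IH hS]; first by exists [::].
  have [L hL] : exists L : seq I, forall b, b \in S -> exists i, List.In i L /\ a i b.
    by apply: IH => c hc; apply: hS; rewrite inE hc orbT.
  have [j hj] := hS b (mem_head _ _).
  exists (j :: L) => c; rewrite inE => /orP [/eqP ->|hc].
    by exists j; split=> //; left.
  by have [i [hi hai]] := hL c hc; exists i; split=> //; right.
have C : forall p, is_tmaximal p -> tid2 p ->
    exists i, List.In i L /\ ~ (forall r, a i r -> p r).
  move=> p [_ [hp1 _]] hp2; apply: NNPP => hn; apply: hp1.
  apply: (tid2_no1 hp2); apply/tclos_vl; exists S; split; last by rewrite -(rmorph1 emb).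
  move=> b hb; have [i [hi hai]] := hL b hb.
  apply: NNPP => hpb; apply: hn; exists i; split=> //; move=> h; apply: hpb; exact: h.
case: (classic (exists p0, is_tmaximal p0 /\ forall r, p0 r -> r = 0)) =>
    [[p0 [hp0 hz0]]|nz].
  have [i0 hi0] := cov p0 hp0.
  exists (i0 :: L) => p hp; case: (tideal_split (proj1 hp)) => [hz|hp2].
    exists i0; split; first by left.
    move=> h; apply: hi0 => r hr; have := hz r (h r hr) => ->.
    by apply: ideal0; case: hp0 => [[]].
  by have [i [hi hn]] := C p hp hp2; exists i; split=> //; right.
exists L => p hp; case: (tideal_split (proj1 hp)) => [hz|hp2].
  by exfalso; apply: nz; exists p.
exact: C p hp hp2.
Qed.

End Aux.

Theorem corollary2p7 (R : idomainType) :
  PvMD R <->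
  (essential R /\
   exists Y : (R -> Prop) -> Prop, ess_rep Y /\ zariski_quasi_compact Y).
Proof.
split; last by move=> [_ [Y [h1 h2]]]; exact: partB h1 h2.
move=> hP.
have hrep : ess_rep (@is_tmaximal R).
  split; first by move=> p hp; split; [apply: tmax_prime|apply: hP].
  move=> x; split; first exact: tmax_inter.
  move=> [r ->] p [_ [hp1 _]]; exists r, 1; split=> //.
  by rewrite rmorph1 divr1.
split; first by exists (@is_tmaximal R).
by exists (@is_tmaximal R); split=> //; apply: tmax_qc.
Qed.
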